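(* Let $S$ be a left cancellative semigroup and let $\omega$ be a weight on $S$. If $\ell^{1}(S,\omega)$ is pseudo-amenable, then $S$ is a group.
   Context: $S$ is left cancellative if $st=su$ implies $t=u$. A weight on $S$ is a function $\omega:S\to(0,\infty)$ with $\omega(st)\le\omega(s)\omega(t)$. The Beurling algebra $\ell^{1}(S,\omega)$ is the space of $f=\sum_s f(s)\delta_s$ with $\sum_s|f(s)|\omega(s)<\infty$, with convolution $\delta_s*\delta_t=\delta_{st}$. For a Banach algebra $\mathcal{A}$, with $\pi:\mathcal{A}\hat{\otimes}\mathcal{A}\to\mathcal{A}$, $\pi(a\otimes b)=ab$, an approximate diagonal is a net $(m_i)$ in $\mathcal{A}\hat{\otimes}\mathcal{A}$ with $a\cdot m_i-m_i\cdot a\to0$ and $a\pi(m_i)\to a$ for all $a\in\mathcal{A}$ (module actions $c\cdot(a\otimes b)=ca\otimes b$, $(a\otimes b)\cdot c=a\otimes bc$); $\mathcal{A}$ is pseudo-amenable if it has an approximate diagonal. *)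

(* Defs.v *)
From HB Require Import structures.
From mathcomp Require Import all_boot all_order all_algebra.
From mathcomp Require Import all_classical all_reals all_analysis.
From mathcomp Require Import complex.
Set Implicit Arguments. Unset Strict Implicit. Unset Printing Implicit Defensive.
Import Order.TTheory GRing.Theory Num.Theory.
Local Open Scope ring_scope.

Section Beurling.
Variable R : realType.

Definition cmod (z : R[i]) : R := complex.Re `|z|.

(* sum of an absolutely summable real family over an arbitrary (choice) type *)
Definition rsum (T : choiceType) (g : T -> R) : R :=
  fine (\esum_(x in [set: T]) (Num.max (g x) 0)%:E)
  - fine (\esum_(x in [set: T]) (Num.max (- g x) 0)%:E).

Definition csum (T : choiceType) (f : T -> R[i]) : R[i] :=
  Complex (rsum (fun x => complex.Re (f x))) (rsum (fun x => complex.Im (f x))).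

Definition in_l1 (T : choiceType) (w : T -> R) (f : T -> R[i]) : Prop :=
  (\esum_(x in [set: T]) (cmod (f x) * w x)%:E < +oo)%E.

Definition l1norm (T : choiceType) (w : T -> R) (f : T -> R[i]) : R :=
  fine (\esum_(x in [set: T]) (cmod (f x) * w x)%:E).

Variable S : choiceType.
Variable op : S -> S -> S.

Definition is_weight (w : S -> R) : Prop :=
  (forall s, 0 < w s) /\ (forall s t, w (op s t) <= w s * w t).

Definition left_cancellative : Prop :=
  forall s t u, op s t = op s u -> t = u.

Definition is_group : Prop :=
  exists e : S, (forall s, op e s = s /\ op s e = s) /\
    (forall s, exists t, op s t = e /\ op t s = e).

(* product weight on S x S: l^1(S,w) (projective tensor) l^1(S,w) = l^1(S x S, w x w) *)
Definition wprod (w : S -> R) (p : S * S) : R := w p.1 * w p.2.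

(* convolution in l^1(S,w): delta_s * delta_t = delta_(st) *)
Definition conv (f g : S -> R[i]) (u : S) : R[i] :=
  csum (fun p : S * S => if op p.1 p.2 == u then f p.1 * g p.2 else 0).

(* left module action  a . (b (x) c) = ab (x) c  on l^1(S x S) *)
Definition lact (a : S -> R[i]) (m : S * S -> R[i]) (q : S * S) : R[i] :=
  csum (fun p : S * S => if op p.1 p.2 == q.1 then a p.1 * m (p.2, q.2) else 0).

(* right module action  (b (x) c) . a = b (x) ca  on l^1(S x S) *)
Definition ract (m : S * S -> R[i]) (a : S -> R[i]) (q : S * S) : R[i] :=
  csum (fun p : S * S => if op p.1 p.2 == q.2 then m (q.1, p.1) * a p.2 else 0).

(* the product map pi(b (x) c) = bc *)
Definition pimap (m : S * S -> R[i]) (u : S) : R[i] :=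
  csum (fun p : S * S => if op p.1 p.2 == u then m p else 0).

Definition approx_diagonal (w : S -> R) (I : Type) (le : I -> I -> Prop)
    (m : I -> S * S -> R[i]) : Prop :=
  [/\ (forall i, le i i),
      (forall i j k, le i j -> le j k -> le i k),
      (forall i j, exists k, le i k /\ le j k),
      (forall i, in_l1 (wprod w) (m i)) &
      (forall a : S -> R[i], in_l1 w a ->
         forall eps : R, 0 < eps -> exists i0, forall i, le i0 i ->
           l1norm (wprod w) (fun q => lact a (m i) q - ract (m i) a q) < eps /\
           l1norm w (fun u => conv a (pimap (m i)) u - a u) < eps)].

Definition pseudo_amenable_l1 (w : S -> R) : Prop :=
  exists (I : Type) (le : I -> I -> Prop) (m : I -> S * S -> R[i]),
    approx_diagonal w le m.

End Beurling.

(* Main.v *)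
Require Import Defs.
From HB Require Import structures.
From mathcomp Require Import all_boot all_order all_algebra.
From mathcomp Require Import all_classical all_reals all_analysis.
From mathcomp Require Import complex.
Import Order.TTheory GRing.Theory Num.Theory.
Local Open Scope ring_scope.

From mathcomp Require Import ring lra.

Local Open Scope classical_set_scope.
Set Implicit Arguments. Unset Strict Implicit.


Section Tools.
Variable R : realType.

Lemma esumZ (T : choiceType) (D : set T) (a : T -> \bar R) (c : R) :
  0 <= c -> (forall x, (0 <= a x)%E) ->
  \esum_(x in D) (c%:E * a x)%E = (c%:E * \esum_(x in D) a x)%E.
Proof.
move=> c0 a0; rewrite /esum -ereal_supZl //; last first.
  by apply/set0P; exists 0%E; exists set0; [exact: fsets_set0|rewrite fsbig_set0].
congr ereal_sup; apply/seteqP; split => x /=.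
  by move=> [A DA <-]; exists (\sum_(x \in A) a x)%E; [by exists A|rewrite ge0_mule_fsumr].
by move=> [y [A DA <-] <-]; exists A => //; rewrite ge0_mule_fsumr.
Qed.

Lemma esum_single (T : choiceType) (a : T -> \bar R) (t : T) :
  (forall x, x != t -> a x = 0%E) -> (0 <= a t)%E ->
  \esum_(x in [set: T]) a x = a t.
Proof.
move=> a0 at0.
rewrite (esumID [set t]) ?setTI; last first.
  by move=> x _; have [->|/a0->] := eqVneq x t.
rewrite esum_set1 // esum1 ?adde0 // => x /= xt; apply: a0; exact/eqP.
Qed.

Lemma esum_ge_one (T : choiceType) (a : T -> \bar R) (t : T) :
  (forall x, (0 <= a x)%E) -> (a t <= \esum_(x in [set: T]) a x)%E.
Proof.
move=> a0; rewrite (esumID [set t]) ?setTI; last by move=> *; exact: a0.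
rewrite esum_set1 // leeDl //; apply: esum_ge0 => x _; exact: a0.
Qed.

Lemma esum_reindex (U T : choiceType) (i : U -> T) (a : T -> \bar R) :
  injective i -> (forall x, (0 <= a x)%E) ->
  (forall x, a x != 0%E -> exists u, x = i u) ->
  \esum_(x in [set: T]) a x = \esum_(u in [set: U]) a (i u).
Proof.
move=> ii a0 ar.
rewrite (esumID (range i)); last by move=> *; exact: a0.
rewrite !setTI [X in (_ + X)%E]esum1 ?adde0; last first.
  move=> x /= nx; apply/eqP; apply: contraT => /ar [u xu].
  by exfalso; apply: nx; exists u.
by apply: esum_image => x y _ _ /ii.
Qed.

Lemma esum_fubini (A B : choiceType) (g : A * B -> \bar R) :
  (forall x, (0 <= g x)%E) ->
  \esum_(a in [set: A]) \esum_(b in [set: B]) g (a, b) =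
  \esum_(x in [set: A * B]) g x.
Proof.
move=> g0; rewrite (@esum_esum _ _ _ [set: A] (fun=> [set: B]) (fun a b => g (a, b))) //.
have -> : [set: A] `*`` (fun=> [set: B]) = [set: A * B].
  by apply/seteqP; split => x //=.
by apply: eq_esum => -[].
Qed.

End Tools.


Section RTools.
Variable R : realType.

Definition summ (T : choiceType) (g : T -> R) : Prop :=
  (\esum_(x in [set: T]) (`|g x|)%:E < +oo)%E.


Lemma esum_fin (T : choiceType) (g : T -> R) :
  (forall x, 0 <= g x) -> (\esum_(x in [set: T]) (g x)%:E < +oo)%E ->
  \esum_(x in [set: T]) (g x)%:E = (fine (\esum_(x in [set: T]) (g x)%:E))%:E.
Proof.
move=> g0 lt; rewrite fineK // ge0_fin_numE //; apply: esum_ge0 => x _.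
by rewrite lee_fin.
Qed.

Lemma esum_le_lt (T : choiceType) (f g : T -> R) :
  (forall x, f x <= g x) ->
  (\esum_(x in [set: T]) (g x)%:E < +oo)%E ->
  (\esum_(x in [set: T]) (f x)%:E < +oo)%E.
Proof.
move=> fg; apply: le_lt_trans; apply: le_esum => x _; by rewrite lee_fin.
Qed.

Lemma summ_le (T : choiceType) (f g : T -> R) :
  (forall x, `|f x| <= g x) ->
  (\esum_(x in [set: T]) (g x)%:E < +oo)%E -> summ f.
Proof. exact: esum_le_lt. Qed.

Lemma pos_le (x : R) : 0 <= Num.max x 0 <= `|x|.
Proof. rewrite le_max lexx orbT /=; rewrite ge_max normr_ge0 andbT; exact: ler_norm. Qed.

Lemma neg_le (x : R) : 0 <= Num.max (- x) 0 <= `|x|.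
Proof. by rewrite -normrN pos_le. Qed.

Lemma pos_fin (T : choiceType) (g : T -> R) : summ g ->
  (\esum_(x in [set: T]) (Num.max (g x) 0)%:E < +oo)%E.
Proof. apply: esum_le_lt => x; by case/andP: (pos_le (g x)). Qed.

Lemma neg_fin (T : choiceType) (g : T -> R) : summ g ->
  (\esum_(x in [set: T]) (Num.max (- g x) 0)%:E < +oo)%E.
Proof. apply: esum_le_lt => x; by case/andP: (neg_le (g x)). Qed.

Lemma rsum_ge0 (T : choiceType) (g : T -> R) : (forall x, 0 <= g x) ->
  rsum g = fine (\esum_(x in [set: T]) (g x)%:E).
Proof.
move=> g0; rewrite /rsum [X in _ - fine X]esum1 ?subr0; last first.
  by move=> x _; congr EFin; apply/max_idPr; rewrite lerNl oppr0.
by congr fine; apply: eq_esum => x _; congr EFin; apply/max_idPl.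
Qed.

Lemma rsumN (T : choiceType) (g : T -> R) :
  rsum (fun x => - g x) = - rsum g.
Proof.
rewrite /rsum opprB; congr (_ - fine _); apply: eq_esum => x _; by rewrite opprK.
Qed.

Lemma rsum_eq (T : choiceType) (f g : T -> R) : (forall x, f x = g x) ->
  rsum f = rsum g.
Proof. by move=> fg; congr rsum; apply: funext. Qed.

Lemma absE (x : R) : `|x| = Num.max x 0 + Num.max (- x) 0.
Proof.
have [h|h] := leP 0 x.
  by rewrite ger0_norm // (max_idPr _) ?addr0 // lerNl oppr0.
by rewrite ltr0_norm // (max_idPl _) ?add0r // lerNr oppr0 ltW.
Qed.

Lemma rsum_abs (T : choiceType) (g : T -> R) : summ g ->
  `|rsum g| <= fine (\esum_(x in [set: T]) (`|g x|)%:E).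
Proof.
move=> sg; rewrite /rsum.
have e : \esum_(x in [set: T]) (`|g x|)%:E =
  (\esum_(x in [set: T]) (Num.max (g x) 0)%:E +
   \esum_(x in [set: T]) (Num.max (- g x) 0)%:E)%E.
  rewrite -esumD; last 2 first.
  - by move=> x _; rewrite lee_fin; case/andP: (pos_le (g x)).
  - by move=> x _; rewrite lee_fin; case/andP: (neg_le (g x)).
  apply: eq_esum => x _; rewrite -EFinD; congr EFin.
  exact: absE.
rewrite e (esum_fin _ (pos_fin sg)); last by move=> x; case/andP: (pos_le (g x)).
rewrite (esum_fin _ (neg_fin sg)); last by move=> x; case/andP: (neg_le (g x)).
rewrite -EFinD /=.
set a := fine _; set b := fine _.
have a0 : 0 <= a by apply: fine_ge0; apply: esum_ge0 => x _; rewrite lee_fin; case/andP: (pos_le (g x)).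
have b0 : 0 <= b by apply: fine_ge0; apply: esum_ge0 => x _; rewrite lee_fin; case/andP: (neg_le (g x)).
rewrite (le_trans (ler_normB _ _)) // !ger0_norm //.
Qed.

End RTools.


Section RTools2.
Variable R : realType.

Lemma pos_ge0 (x : R) : 0 <= Num.max x 0.
Proof. by case/andP: (pos_le x). Qed.
Lemma neg_ge0 (x : R) : 0 <= Num.max (- x) 0.
Proof. by case/andP: (neg_le x). Qed.
Lemma posneg (x : R) : Num.max x 0 - Num.max (- x) 0 = x.
Proof.
have [h|h] := leP 0 x.
  by rewrite (max_idPr _) ?subr0 // lerNl oppr0.
by rewrite (max_idPl _) ?sub0r ?opprK // lerNr oppr0 ltW.
Qed.

Lemma esumD_R (T : choiceType) (f g : T -> R) :
  (forall x, 0 <= f x) -> (forall x, 0 <= g x) ->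
  \esum_(x in [set: T]) (f x + g x)%:E =
  (\esum_(x in [set: T]) (f x)%:E + \esum_(x in [set: T]) (g x)%:E)%E.
Proof.
move=> f0 g0; under eq_esum do rewrite EFinD.
by rewrite esumD // => x _; rewrite lee_fin.
Qed.

Lemma summD (T : choiceType) (f g : T -> R) : summ f -> summ g ->
  summ (fun x => f x + g x).
Proof.
move=> sf sg; apply: (@summ_le _ _ _ (fun x => `|f x| + `|g x|)).
  by move=> x; exact: ler_normD.
by rewrite esumD_R // lte_add_pinfty.
Qed.

Lemma summN (T : choiceType) (f : T -> R) : summ f -> summ (fun x => - f x).
Proof. by move=> sf; apply: (summ_le (g := fun x => `|f x|)) => // x; rewrite normrN. Qed.

Lemma esum_finR (T : choiceType) (f : T -> R) :
  (forall x, 0 <= f x) -> (\esum_(x in [set: T]) (f x)%:E < +oo)%E ->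
  (\esum_(x in [set: T]) (f x)%:E)%E = (fine (\esum_(x in [set: T]) (f x)%:E))%:E.
Proof. exact: esum_fin. Qed.

Lemma rsumD (T : choiceType) (f g : T -> R) : summ f -> summ g ->
  rsum (fun x => f x + g x) = rsum f + rsum g.
Proof.
move=> sf sg; have sh := summD sf sg.
set h := fun x => f x + g x.
have key : \esum_(x in [set: T]) ((Num.max (h x) 0 + Num.max (- f x) 0) + Num.max (- g x) 0)%:E =
           \esum_(x in [set: T]) ((Num.max (- h x) 0 + Num.max (f x) 0) + Num.max (g x) 0)%:E.
  apply: eq_esum => x _; congr EFin.
  have := posneg (h x); have := posneg (f x); have := posneg (g x); rewrite /h.
  move=> e1 e2 e3; lra.
rewrite !esumD_R in key; try by move=> x; rewrite ?addr_ge0 ?pos_ge0 ?neg_ge0.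
rewrite (esum_finR (fun x => pos_ge0 (h x)) (pos_fin sh)) (esum_finR (fun x => neg_ge0 (h x)) (neg_fin sh)) in key.
rewrite (esum_finR (fun x => pos_ge0 (f x)) (pos_fin sf)) (esum_finR (fun x => neg_ge0 (f x)) (neg_fin sf)) in key.
rewrite (esum_finR (fun x => pos_ge0 (g x)) (pos_fin sg)) (esum_finR (fun x => neg_ge0 (g x)) (neg_fin sg)) in key.
move: key; rewrite -!EFinD => -[]; rewrite /rsum /h; lra.
Qed.

Lemma rsumB (T : choiceType) (f g : T -> R) : summ f -> summ g ->
  rsum (fun x => f x - g x) = rsum f - rsum g.
Proof. by move=> sf sg; rewrite rsumD ?rsumN //; exact: summN. Qed.

Lemma rsum_single (T : choiceType) (g : T -> R) (t : T) :
  (forall x, x != t -> g x = 0) -> rsum g = g t.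
Proof.
move=> g0; rewrite /rsum !(@esum_single _ _ _ t) /=.
- exact: posneg.
- by move=> x /g0 ->; rewrite oppr0 maxxx.
- by rewrite lee_fin neg_ge0.
- by move=> x /g0 ->; rewrite maxxx.
- by rewrite lee_fin pos_ge0.
Qed.

Lemma rsum0 (T : choiceType) (g : T -> R) :
  (forall x, g x = 0) -> rsum g = 0.
Proof.
move=> g0; rewrite /rsum !esum1 ?subrr // => x _; by rewrite g0 ?oppr0 maxxx.
Qed.

Lemma rsum_reindex (U T : choiceType) (i : U -> T) (g : T -> R) :
  injective i -> (forall x, g x != 0 -> exists u, x = i u) ->
  rsum g = rsum (fun u => g (i u)).
Proof.
move=> ii gr; rewrite /rsum (esum_reindex ii); last 2 first.
- by move=> x; rewrite lee_fin pos_ge0.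
- move=> x; have [->|/gr//] := eqVneq (g x) 0; by rewrite maxxx eqxx.
rewrite (esum_reindex ii) //.
- by move=> x; rewrite lee_fin neg_ge0.
- move=> x; have [->|/gr//] := eqVneq (g x) 0; by rewrite oppr0 maxxx eqxx.
Qed.

Lemma fub_aux (A B : choiceType) (h : A * B -> R) :
  (forall x, 0 <= h x) -> (\esum_(x in [set: A * B]) (h x)%:E < +oo)%E ->
  (forall a, \esum_(b in [set: B]) (h (a, b))%:E < +oo)%E /\
  \esum_(a in [set: A]) (fine (\esum_(b in [set: B]) (h (a, b))%:E))%:E =
  \esum_(x in [set: A * B]) (h x)%:E.
Proof.
move=> h0 hf.
have inner : forall a, (\esum_(b in [set: B]) (h (a, b))%:E < +oo)%E.
  move=> a; apply: le_lt_trans hf; rewrite -esum_fubini; last by move=> x; rewrite lee_fin.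
  apply: (esum_ge_one (a := fun a => \esum_(b in [set: B]) (h (a, b))%:E) a) => a'.
  by apply: esum_ge0 => b _; rewrite lee_fin.
split => //; rewrite -esum_fubini; last by move=> x; rewrite lee_fin.
apply: eq_esum => a _; rewrite fineK // ge0_fin_numE ?inner //.
by apply: esum_ge0 => b _; rewrite lee_fin.
Qed.

Lemma rsum_fubini (A B : choiceType) (g : A * B -> R) : summ g ->
  rsum g = rsum (fun a => rsum (fun b => g (a, b))).
Proof.
move=> sg.
have [ip ep] := fub_aux (fun x => pos_ge0 (g x)) (pos_fin sg).
have [iN eN] := fub_aux (fun x => neg_ge0 (g x)) (neg_fin sg).
set P := fun a => fine (\esum_(b in [set: B]) (Num.max (g (a, b)) 0)%:E).
set N := fun a => fine (\esum_(b in [set: B]) (Num.max (- g (a, b)) 0)%:E).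
have P0 : forall a, 0 <= P a.
  by move=> a; apply: fine_ge0; apply: esum_ge0 => b _; rewrite lee_fin pos_ge0.
have N0 : forall a, 0 <= N a.
  by move=> a; apply: fine_ge0; apply: esum_ge0 => b _; rewrite lee_fin neg_ge0.
have sP : summ P.
  rewrite /summ; under eq_esum do rewrite ger0_norm ?P0 //.
  by rewrite ep; exact: pos_fin.
have sN : summ N.
  rewrite /summ; under eq_esum do rewrite ger0_norm ?N0 //.
  by rewrite eN; exact: neg_fin.
rewrite (_ : (fun a => rsum (fun b => g (a, b))) = (fun a => P a - N a)); last by [].
rewrite rsumB // (rsum_ge0 P0) (rsum_ge0 N0) /P /N ep eN.
by [].
Qed.

End RTools2.


Section CTools.
Variable R : realType.
Implicit Types z a b : R[i].

Lemma cmod_normc z : cmod z = Normc.normc z.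
Proof. by rewrite /cmod normc_def; case: z. Qed.

Lemma cmodE z : cmod z = Num.sqrt (complex.Re z ^+ 2 + complex.Im z ^+ 2).
Proof. by rewrite /cmod normc_def. Qed.

Lemma cmod_ge0 z : 0 <= cmod z.
Proof. by rewrite cmodE sqrtr_ge0. Qed.

Lemma Re_le z : `|complex.Re z| <= cmod z.
Proof. by rewrite cmodE -sqrtr_sqr ler_wsqrtr // lerDl sqr_ge0. Qed.

Lemma Im_le z : `|complex.Im z| <= cmod z.
Proof. by rewrite cmodE -sqrtr_sqr ler_wsqrtr // lerDr sqr_ge0. Qed.

Lemma cmod_le z : cmod z <= `|complex.Re z| + `|complex.Im z|.
Proof.
rewrite cmodE -[X in _ <= X]ger0_norm ?addr_ge0 // -sqrtr_sqr ler_wsqrtr //.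
rewrite -(real_normK (num_real (complex.Re z))) -(real_normK (num_real (complex.Im z))).
have := normr_ge0 (complex.Re z); have := normr_ge0 (complex.Im z).
set x := `|_|; set y := `|_|; move=> *; nra.
Qed.

Lemma cmodM a b : cmod (a * b) = cmod a * cmod b.
Proof. by rewrite !cmod_normc Normc.normcM. Qed.

Lemma cmodD a b : cmod (a + b) <= cmod a + cmod b.
Proof. by rewrite !cmod_normc le_normcD. Qed.

Lemma cmodN a : cmod (- a) = cmod a.
Proof. by rewrite !cmod_normc normcN. Qed.

Lemma cmodB a b : cmod (a - b) <= cmod a + cmod b.
Proof. by rewrite -(cmodN b) cmodD. Qed.

Lemma cmod0 : cmod (0 : R[i]) = 0.
Proof. by rewrite cmod_normc Normc.normc0. Qed.

Lemma cmod1 : cmod (1 : R[i]) = 1.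
Proof. by rewrite cmod_normc Normc.normc1. Qed.

Lemma csum_single (T : choiceType) (f : T -> R[i]) (t : T) :
  (forall x, x != t -> f x = 0) -> csum f = f t.
Proof.
move=> f0; rewrite /csum (@rsum_single _ _ _ t) ?(@rsum_single _ _ _ t).
- by case: (f t).
- by move=> x /f0 ->.
- by move=> x /f0 ->.
Qed.

Lemma csum0 (T : choiceType) (f : T -> R[i]) :
  (forall x, f x = 0) -> csum f = 0.
Proof. by move=> f0; rewrite /csum !rsum0 // => x; rewrite f0. Qed.

Lemma Re_csum (T : choiceType) (f : T -> R[i]) :
  complex.Re (csum f) = rsum (fun x => complex.Re (f x)).
Proof. by []. Qed.

Lemma csum_bound (T : choiceType) (f : T -> R[i]) :
  ((cmod (csum f))%:E <= 2%:E * \esum_(x in [set: T]) (cmod (f x))%:E)%E.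
Proof.
have E0 : (0 <= \esum_(x in [set: T]) (cmod (f x))%:E)%E.
  by apply: esum_ge0 => x _; rewrite lee_fin cmod_ge0.
have [fin|inf] := boolP (\esum_(x in [set: T]) (cmod (f x))%:E < +oo)%E; last first.
  have -> : \esum_(x in [set: T]) (cmod (f x))%:E = +oo%E.
    by move: inf; rewrite -leNgt leye_eq => /eqP.
  by rewrite mulry gtr0_sg // mul1e leey.
have sRe : summ (fun x => complex.Re (f x)).
  by apply: (summ_le (g := fun x => cmod (f x))) => // x; exact: Re_le.
have sIm : summ (fun x => complex.Im (f x)).
  by apply: (summ_le (g := fun x => cmod (f x))) => // x; exact: Im_le.
rewrite (esum_fin (fun x => cmod_ge0 (f x)) fin) -EFinM lee_fin.
apply: (le_trans (cmod_le _)).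
have h1 := rsum_abs sRe; have h2 := rsum_abs sIm.
have l1 : fine (\esum_(x in [set: T]) (`|complex.Re (f x)|)%:E) <=
          fine (\esum_(x in [set: T]) (cmod (f x))%:E).
  apply: fine_le; rewrite ?ge0_fin_numE //; last first.
  - by apply: le_esum => x _; rewrite lee_fin Re_le.
  - by apply: esum_ge0 => x _; rewrite lee_fin.
have l2 : fine (\esum_(x in [set: T]) (`|complex.Im (f x)|)%:E) <=
          fine (\esum_(x in [set: T]) (cmod (f x))%:E).
  apply: fine_le; rewrite ?ge0_fin_numE //; last first.
  - by apply: le_esum => x _; rewrite lee_fin Im_le.
  - by apply: esum_ge0 => x _; rewrite lee_fin.
rewrite /csum /=; lra.
Qed.

End CTools.


Section Transfer.
Variable R : realType.

Lemma csum_transfer (U T : choiceType) (h : U -> T -> R[i]) (W : U -> R)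
    (G : U * T -> R) :
  (forall u, 0 <= W u) -> (forall x, 0 <= G x) ->
  (forall u t, W u * cmod (h u t) <= G (u, t)) ->
  (\esum_(u in [set: U]) (cmod (csum (h u)) * W u)%:E <=
   2%:E * \esum_(x in [set: U * T]) (G x)%:E)%E.
Proof.
move=> W0 G0 hG.
rewrite -esum_fubini; last by move=> x; rewrite lee_fin.
rewrite -esumZ //; last by move=> u; apply: esum_ge0 => t _; rewrite lee_fin.
apply: le_esum => u _.
rewrite EFinM muleC (@le_trans _ _ ((W u)%:E * (2%:E * \esum_(t in [set: T]) (cmod (h u t))%:E)))%E //.
  by apply: lee_wpmul2l; rewrite ?lee_fin // csum_bound.
rewrite muleCA lee_wpmul2l // -esumZ //; last by move=> t; rewrite lee_fin cmod_ge0.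
by apply: le_esum => t _; rewrite -EFinM lee_fin.
Qed.

Lemma esum_reindexR (U T : choiceType) (i : U -> T) (G : T -> R) :
  injective i -> (forall x, 0 <= G x) ->
  (forall x, G x != 0 -> exists u, x = i u) ->
  \esum_(x in [set: T]) (G x)%:E = \esum_(u in [set: U]) (G (i u))%:E.
Proof.
move=> ii G0 Gr; apply: esum_reindex => //; by move=> x; rewrite eqe => /Gr.
Qed.

End Transfer.


Section Semi.
Variables (R : realType) (S : choiceType) (op : S -> S -> S).
Hypothesis op_assoc : associative op.
Hypothesis lc : left_cancellative op.
Variable w : S -> R.
Hypothesis hw : is_weight op w.

Definition dl (t : S) : S -> R[i] := fun x => if x == t then 1 else 0.

Lemma w_gt0 x : 0 < w x. Proof. by case: hw. Qed.
Lemma w_ge0 x : 0 <= w x. Proof. exact/ltW/w_gt0. Qed.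
Lemma w_mul x y : w (op x y) <= w x * w y. Proof. by case: hw. Qed.
Lemma wprod_ge0 p : 0 <= wprod w p. Proof. by rewrite /wprod mulr_ge0 ?w_ge0. Qed.

Lemma in_l1_dl t : in_l1 w (dl t).
Proof.
rewrite /in_l1 (@esum_single _ _ _ t).
- by rewrite /dl eqxx cmod1 mul1r ltry.
- by move=> x; rewrite /dl => /negbTE ->; rewrite cmod0 mul0r.
- by rewrite lee_fin mulr_ge0 ?cmod_ge0 ?w_ge0.
Qed.

Lemma l1_point (T : choiceType) (v : T -> R) (f : T -> R[i]) q :
  (forall x, 0 <= v x) -> in_l1 v f -> cmod (f q) * v q <= l1norm v f.
Proof.
move=> v0 hf; rewrite /l1norm.
have h : ((cmod (f q) * v q)%:E <= \esum_(x in [set: T]) (cmod (f x) * v x)%:E)%E.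
  apply: (esum_ge_one (a := fun x => (cmod (f x) * v x)%:E)) => x.
  by rewrite lee_fin mulr_ge0 ?cmod_ge0.
rewrite -lee_fin (le_trans h) // fineK // ge0_fin_numE //.
by apply: esum_ge0 => x _; rewrite lee_fin mulr_ge0 ?cmod_ge0.
Qed.

Lemma in_l1_sub (T : choiceType) (v : T -> R) (f g : T -> R[i]) :
  (forall x, 0 <= v x) -> in_l1 v f -> in_l1 v g -> in_l1 v (fun x => f x - g x).
Proof.
move=> v0 hf hg; rewrite /in_l1.
apply: (@esum_le_lt _ _ _ (fun x => cmod (f x) * v x + cmod (g x) * v x)).
  by move=> x; rewrite -mulrDl ler_wpM2r ?cmodB.
by rewrite esumD_R ?lte_add_pinfty // => x; rewrite mulr_ge0 ?cmod_ge0.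
Qed.

Lemma fin_helper (U T : choiceType) (i : U -> T) (G : T -> R) (c : R) (H : U -> R) :
  injective i -> (forall x, 0 <= G x) -> (forall x, G x != 0 -> exists u, x = i u) ->
  0 <= c -> (forall u, G (i u) = c * H u) -> (forall u, 0 <= H u) ->
  (\esum_(u in [set: U]) (H u)%:E < +oo)%E ->
  (2%:E * (\esum_(x in [set: T]) (G x)%:E) < +oo)%E.
Proof.
move=> ii G0 Gr c0 GH H0 Hf.
rewrite (esum_reindexR ii G0 Gr).
under eq_esum do rewrite GH EFinM.
have H0' : forall u, (0 <= (H u)%:E)%E by move=> u; rewrite lee_fin.
rewrite esumZ //.
apply: lte_mul_pinfty => //.
apply: lte_mul_pinfty; rewrite ?lee_fin //.

Qed.

Lemma pimap_l1 (m : S * S -> R[i]) : in_l1 (wprod w) m -> in_l1 w (pimap op m).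
Proof.
move=> hm; rewrite /in_l1 /pimap.
apply: le_lt_trans (csum_transfer (h := fun u p => if op p.1 p.2 == u then m p else 0) (W := w)
  (G := fun x => if op x.2.1 x.2.2 == x.1 then cmod (m x.2) * wprod w x.2 else 0) _ _ _) _.
- exact: w_ge0.
- by move=> x; case: ifP => _ //; rewrite mulr_ge0 ?cmod_ge0 ?wprod_ge0.
- move=> u [p1 p2] /=; case: eqP => [<-|_]; last by rewrite cmod0 mulr0.
  by rewrite mulrC ler_wpM2l ?cmod_ge0 ?w_mul.
apply: (@fin_helper _ _ (fun p => (op p.1 p.2, p)) _ 1 (fun p => cmod (m p) * wprod w p)) => //.
- by move=> p q [].
- by move=> x; case: ifP => _ //; rewrite mulr_ge0 ?cmod_ge0 ?wprod_ge0.
- move=> [u [p1 p2]] /=; case: (op p1 p2 =P u) => [<- _|]; last by rewrite eqxx.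
  by exists (p1, p2).
- by move=> p /=; rewrite eqxx mul1r.
- by move=> p; rewrite mulr_ge0 ?cmod_ge0 ?wprod_ge0.
Qed.

Lemma conv_l1 (s : S) (g : S -> R[i]) : in_l1 w g -> in_l1 w (Defs.conv op (dl s) g).
Proof.
move=> hg; rewrite /in_l1 /Defs.conv.
apply: le_lt_trans (csum_transfer (h := fun u p => if op p.1 p.2 == u then dl s p.1 * g p.2 else 0) (W := w)
  (G := fun x => if (op x.2.1 x.2.2 == x.1) && (x.2.1 == s) then w s * (cmod (g x.2.2) * w x.2.2) else 0) _ _ _) _.
- exact: w_ge0.
- by move=> x; case: ifP => _ //; rewrite !mulr_ge0 ?cmod_ge0 ?w_ge0.
- move=> u [p1 p2] /=; case: (op p1 p2 =P u) => [<-|_]; last by rewrite cmod0 mulr0.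
  rewrite /dl; case: (p1 =P s) => [->|_]; last by rewrite mul0r cmod0 mulr0.
  rewrite mul1r.
  have := w_mul s p2; have := w_ge0 s; have := w_ge0 p2.
  have := cmod_ge0 (g p2); set a := cmod _; set b := w (op s p2).
  move=> *; rewrite /=; nra.
apply: (@fin_helper _ _ (fun t => (op s t, (s, t))) _ (w s) (fun t => cmod (g t) * w t)) => //.
- by move=> p q [].
- by move=> x; case: ifP => _ //; rewrite !mulr_ge0 ?cmod_ge0 ?w_ge0.
- move=> [u [p1 p2]] /=; case: (op p1 p2 =P u) => [<-|]; last by rewrite eqxx.
  case: (p1 =P s) => [-> _|]; last by rewrite eqxx.
  by exists p2.
- exact: w_ge0.
- by move=> t /=; rewrite !eqxx.
- by move=> t; rewrite mulr_ge0 ?cmod_ge0 ?w_ge0.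
Qed.

Lemma lact_l1 (s : S) (m : S * S -> R[i]) :
  in_l1 (wprod w) m -> in_l1 (wprod w) (lact op (dl s) m).
Proof.
move=> hm; rewrite /in_l1 /lact.
apply: le_lt_trans (csum_transfer (h := fun q p => if op p.1 p.2 == q.1 then dl s p.1 * m (p.2, q.2) else 0) (W := wprod w)
  (G := fun x => if (op x.2.1 x.2.2 == x.1.1) && (x.2.1 == s) then w s * (cmod (m (x.2.2, x.1.2)) * wprod w (x.2.2, x.1.2)) else 0) _ _ _) _.
- exact: wprod_ge0.
- by move=> x; case: ifP => _ //; rewrite !mulr_ge0 ?cmod_ge0 ?w_ge0 ?wprod_ge0.
- move=> [q1 q2] [p1 p2] /=; case: (op p1 p2 =P q1) => [<-|_]; last by rewrite cmod0 mulr0.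
  rewrite /dl; case: (p1 =P s) => [->|_]; last by rewrite mul0r cmod0 mulr0.
  rewrite mul1r /wprod /=.
  have := w_mul s p2; have := w_ge0 q2; have := w_ge0 s; have := w_ge0 p2.
  have := cmod_ge0 (m (p2, q2)); set a := cmod _; set b := w (op s p2).
  move=> ? ? ? ? ?.
  have -> : b * w q2 * a = b * (w q2 * a) by ring.
  have -> : w s * (a * (w p2 * w q2)) = (w s * w p2) * (w q2 * a) by ring.
  by rewrite ler_wpM2r // mulr_ge0.
apply: (@fin_helper _ _ (fun p => ((op s p.1, p.2), (s, p.1))) _ (w s) (fun p => cmod (m p) * wprod w p)) => //.
- by move=> [p1 p2] [q1 q2] /= [] => *; subst.
- by move=> x; case: ifP => _ //; rewrite !mulr_ge0 ?cmod_ge0 ?w_ge0 ?wprod_ge0.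
- move=> [[q1 q2] [p1 p2]] /=; case: (op p1 p2 =P q1) => [<-|]; last by rewrite eqxx.
  case: (p1 =P s) => [-> _|]; last by rewrite eqxx.
  by exists (p2, q2).
- exact: w_ge0.
- by move=> [t y] /=; rewrite !eqxx.
- by move=> t; rewrite mulr_ge0 ?cmod_ge0 ?wprod_ge0.
Qed.

Lemma ract_l1 (s : S) (m : S * S -> R[i]) :
  in_l1 (wprod w) m -> in_l1 (wprod w) (ract op m (dl s)).
Proof.
move=> hm; rewrite /in_l1 /ract.
apply: le_lt_trans (csum_transfer (h := fun q p => if op p.1 p.2 == q.2 then m (q.1, p.1) * dl s p.2 else 0) (W := wprod w)
  (G := fun x => if (op x.2.1 x.2.2 == x.1.2) && (x.2.2 == s) then w s * (cmod (m (x.1.1, x.2.1)) * wprod w (x.1.1, x.2.1)) else 0) _ _ _) _.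
- exact: wprod_ge0.
- by move=> x; case: ifP => _ //; rewrite !mulr_ge0 ?cmod_ge0 ?w_ge0 ?wprod_ge0.
- move=> [q1 q2] [p1 p2] /=; case: (op p1 p2 =P q2) => [<-|_]; last by rewrite cmod0 mulr0.
  rewrite /dl; case: (p2 =P s) => [->|_]; last by rewrite mulr0 cmod0 mulr0.
  rewrite mulr1 /wprod /=.
  have := w_mul p1 s; have := w_ge0 q1; have := w_ge0 s; have := w_ge0 p1.
  have := cmod_ge0 (m (q1, p1)); set a := cmod _; set b := w (op p1 s).
  move=> ? ? ? ? ?.
  have -> : w q1 * b * a = b * (w q1 * a) by ring.
  have -> : w s * (a * (w q1 * w p1)) = (w p1 * w s) * (w q1 * a) by ring.
  by rewrite ler_wpM2r // mulr_ge0.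
apply: (@fin_helper _ _ (fun p => ((p.1, op p.2 s), (p.2, s))) _ (w s) (fun p => cmod (m p) * wprod w p)) => //.
- by move=> [p1 p2] [q1 q2] /= [] => *; subst.
- by move=> x; case: ifP => _ //; rewrite !mulr_ge0 ?cmod_ge0 ?w_ge0 ?wprod_ge0.
- move=> [[q1 q2] [p1 p2]] /=; case: (op p1 p2 =P q2) => [<-|]; last by rewrite eqxx.
  case: (p2 =P s) => [-> _|ne]. 2: by move=> h; exfalso; move: h; rewrite /=; case: eqP.
  by exists (q1, p1).
- exact: w_ge0.
- by move=> [t y] /=; rewrite !eqxx.
- by move=> t; rewrite mulr_ge0 ?cmod_ge0 ?wprod_ge0.
Qed.

Lemma conv_dl_at (s t : S) (g : S -> R[i]) : Defs.conv op (dl s) g (op s t) = g t.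
Proof.
rewrite /Defs.conv (@csum_single _ _ _ (s, t)) /= ?eqxx /dl ?eqxx ?mul1r //.
move=> [p1 p2] /=; case: (p1 =P s) => [->|_]; last by rewrite mul0r; case: ifP.
rewrite mul1r => ne; case: eqP => // /lc e; by move: ne; rewrite e eqxx.
Qed.

Lemma conv_dl_out (s z : S) (g : S -> R[i]) : (forall t, op s t <> z) ->
  Defs.conv op (dl s) g z = 0.
Proof.
move=> nz; rewrite /Defs.conv csum0 // => -[p1 p2] /=; rewrite /dl.
case: (p1 =P s) => [->|_]; last by rewrite mul0r; case: ifP.
by case: eqP => // /nz.
Qed.

Lemma Re_sub (a b : R[i]) : complex.Re (a - b) = complex.Re a - complex.Re b.
Proof. by case: a; case: b. Qed.

Lemma Re_mul1 (a : R[i]) : complex.Re (a * 1) = complex.Re a.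
Proof. by rewrite mulr1. Qed.

Section Net.
Variables (I : Type) (le : I -> I -> Prop) (m : I -> S * S -> R[i]).
Hypothesis refl : forall i, le i i.
Hypothesis dir : forall i j, exists k, le i k /\ le j k.
Hypothesis ml1 : forall i, in_l1 (wprod w) (m i).
Hypothesis H : forall a : S -> R[i], in_l1 w a ->
  forall eps : R, 0 < eps -> exists i0, forall i, le i0 i ->
    l1norm (wprod w) (fun q => lact op a (m i) q - ract op (m i) a q) < eps /\
    l1norm w (fun u => Defs.conv op a (pimap op (m i)) u - a u) < eps.

Definition Pn (a : S -> R[i]) (eps : R) (i : I) :=
    l1norm (wprod w) (fun q => lact op a (m i) q - ract op (m i) a q) < eps /\
    l1norm w (fun u => Defs.conv op a (pimap op (m i)) u - a u) < eps.

Lemma two a1 a2 eps1 eps2 : in_l1 w a1 -> in_l1 w a2 -> 0 < eps1 -> 0 < eps2 ->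
  exists k, Pn a1 eps1 k /\ Pn a2 eps2 k.
Proof.
move=> h1 h2 e1 e2; have [i0 H0] := H h1 e1; have [i1 H1] := H h2 e2.
have [k [k0 k1]] := dir i0 i1; exists k; split; [exact: H0|exact: H1].
Qed.

Lemma pi_point s k q :
  cmod (Defs.conv op (dl s) (pimap op (m k)) q - dl s q) * w q <=
  l1norm w (fun u => Defs.conv op (dl s) (pimap op (m k)) u - dl s u).
Proof.
apply: (l1_point (f := fun u => Defs.conv op (dl s) (pimap op (m k)) u - dl s u)).
  exact: w_ge0.
apply: in_l1_sub; first exact: w_ge0.
  by apply: conv_l1; apply: pimap_l1.
exact: in_l1_dl.
Qed.

Lemma stepA1 s : exists t, op s t = s.
Proof.
apply/not_existsP => nt.
have [k [[_ hk] _]] := two (in_l1_dl s) (in_l1_dl s) (w_gt0 s) (w_gt0 s).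
have := pi_point s k s; rewrite conv_dl_out; last by move=> t /nt.
rewrite /dl eqxx sub0r cmodN cmod1 mul1r => h.
by have := le_lt_trans h hk; rewrite ltxx.
Qed.

Hypothesis op_assoc' : associative op.

Lemma half_lem (W a : R) : 0 < W -> a * W < W / 2 -> a < 1 / 2.
Proof. move=> *; nra. Qed.

Lemma lid t s : op s t = s -> forall x, op t x = x.
Proof.
move=> h x; have lc' : forall s t u, op s t = op s u -> t = u := lc.
by apply: (lc' s); rewrite op_assoc' h.
Qed.

Lemma stepA (s0 : S) : exists e, forall x, op e x = x /\ op x e = x.
Proof.
have [e he] := stepA1 s0.
exists e => x; split; first exact: lid he x.
have [t ht] := stepA1 x.
suff te : t = e by rewrite -te.
apply/eqP; apply: contraT => nte.
have e1 : 0 < w (op x e) / 2 by rewrite divr_gt0 ?w_gt0.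
have e2 : 0 < w s0 / 2 by rewrite divr_gt0 ?w_gt0.
have [k [[_ h1] [_ h2]]] := two (in_l1_dl x) (in_l1_dl s0) e1 e2.
have p1 := pi_point x k (op x e); rewrite conv_dl_at in p1.
have dx : dl x (op x e) = 0.
  rewrite /dl; case: eqP => // xe.
  have : op x t = op x e by rewrite ht xe.
  by move/lc => te; move: nte; rewrite te eqxx.
rewrite dx subr0 in p1.
have p2 := pi_point s0 k (op s0 e); rewrite conv_dl_at he in p2.
have d1 : dl s0 s0 = 1 by rewrite /dl eqxx.
rewrite d1 in p2.
have p3 := le_lt_trans p1 h1; have p4 := le_lt_trans p2 h2.
have c1 : cmod (1 : R[i]) <= cmod (pimap op (m k) e) + cmod (pimap op (m k) e - 1).
  by rewrite -[X in cmod X](_ : pimap op (m k) e - (pimap op (m k) e - 1) = 1) ?cmodB // opprB addrC subrK.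
rewrite cmod1 in c1.
have q1 := half_lem (w_gt0 _) p3; have q2 := half_lem (w_gt0 _) p4.
by have := le_lt_trans c1 (ltrD q1 q2); rewrite -splitr ltxx.
Qed.

Section StepB.
Variable e : S.
Hypothesis hl : forall x, op e x = x.
Hypothesis hr : forall x, op x e = x.

Lemma keyB s (nl : ~ exists l, op l s = e) (M : S * S -> R[i]) q :
  op q.1 q.2 = s ->
  `|complex.Re (ract op M (dl s) q)| <= cmod (lact op (dl s) M q - ract op M (dl s) q).
Proof.
case: q => q1 q2 hq0; have hq : op q1 q2 = s := hq0.
case: (pselect (exists v, q2 = op v s)) => [[v hv]|nv].
  have -> : lact op (dl s) M (q1, q2) = 0.
    rewrite /lact csum0 // => -[p1 p2] /=; rewrite /dl.
    case: (p1 =P s) => [->|_]; last by rewrite mul0r; case: ifP.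
    case: eqP => // hp; exfalso; apply: nl; exists (op p2 v).
    have : op s (op p2 q2) = op s e by rewrite op_assoc' hp hq hr.
    by move/lc; rewrite hv op_assoc'.
  by rewrite sub0r cmodN; exact: Re_le.
have -> : ract op M (dl s) (q1, q2) = 0.
  rewrite /ract csum0 // => -[p1 p2] /=; rewrite /dl.
  case: (p2 =P s) => [->|_]; last by rewrite mulr0; case: ifP.
  by case: eqP => // hp; exfalso; apply: nv; exists p1; rewrite hp.
by rewrite subr0 (_ : complex.Re 0 = 0) // normr0 cmod_ge0.
Qed.

Lemma w_ge1 u s : op u s = s -> 1 <= w u.
Proof. move=> h; have := w_mul u s; rewrite h => h1; have := w_gt0 s; nra. Qed.

Definition Qf s (M : S * S -> R[i]) (p : S * S) : R :=
  if op (op p.1 p.2) s == s then complex.Re (M p) else 0.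

Lemma wprod_ge1 s p : op (op p.1 p.2) s = s -> 1 <= wprod w p.
Proof.
move=> h; have := w_ge1 h; have := w_mul p.1 p.2; rewrite /wprod => *.
exact: le_trans (w_ge1 h) (w_mul _ _).
Qed.

Lemma Q1 s (M : S * S -> R[i]) : in_l1 (wprod w) M ->
  `|rsum (Qf s M) - 1| <= l1norm w (fun u => pimap op M u - dl e u).
Proof.
move=> hM.
pose i1 := fun p : S * S => (op p.1 p.2, p).
pose H2 := fun x : S * (S * S) =>
  if (op x.1 s == s) && (op x.2.1 x.2.2 == x.1) then complex.Re (M x.2) else 0.
have ii1 : injective i1 by move=> p q [].
have ri1 : forall x, H2 x != 0 -> exists p, x = i1 p.
  move=> [u p]; rewrite /H2 /=; case: ifP => [/andP[_ /eqP <-] _|_]; last by rewrite eqxx.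
  by exists p.
have r1 : rsum (Qf s M) = rsum H2.
  rewrite [RHS](rsum_reindex ii1 ri1); apply: rsum_eq => p.
  by rewrite /Qf /H2 /= eqxx andbT.
have sH2 : summ H2.
  rewrite /summ (esum_reindexR (G := fun x => `|H2 x|) ii1) //; last first.
    by move=> x; rewrite normr_eq0; exact: ri1.
  apply: (@esum_le_lt _ _ _ (fun p => cmod (M p) * wprod w p)) => // p.
  rewrite /H2 /= eqxx andbT; case: eqP => [h|_]; last by rewrite normr0 mulr_ge0 ?cmod_ge0 ?wprod_ge0.
  by rewrite (le_trans (Re_le _)) // ler_peMr ?cmod_ge0 // (wprod_ge1 h).
pose phi := fun u => if op u s == s then complex.Re (pimap op M u) else 0.
have r2 : rsum H2 = rsum phi.
  rewrite (rsum_fubini sH2); apply: rsum_eq => u; rewrite /phi.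
  case: ifP => hu; last by rewrite rsum0 // => p; rewrite /H2 /= hu.
  rewrite Re_csum; apply: rsum_eq => p; rewrite /H2 /= hu /=; by case: ifP.
pose dd := fun u : S => if u == e then (1 : R) else 0.
have rd : rsum dd = 1 by rewrite (rsum_single (t := e)) /dd ?eqxx // => x /negbTE ->.
have sd : summ dd.
  rewrite /summ (esum_single (t := e)) ?ltry // => x.
  by rewrite /dd => /negbTE ->; rewrite normr0.
have sphi : summ phi.
  apply: (summ_le (g := fun u => cmod (pimap op M u) * w u)); last exact: pimap_l1.
  move=> u; rewrite /phi; case: eqP => [h|_]; last by rewrite normr0 mulr_ge0 ?cmod_ge0 ?w_ge0.
  by rewrite (le_trans (Re_le _)) // ler_peMr ?cmod_ge0 // (w_ge1 h).
have sB : summ (fun u => phi u - dd u) by apply: summD => //; exact: summN.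
rewrite r1 r2 -rd -rsumB //.
apply: (le_trans (rsum_abs sB)).
have hfin : in_l1 w (fun u => pimap op M u - dl e u).
  by apply: in_l1_sub; [exact: w_ge0|exact: pimap_l1|exact: in_l1_dl].
have bnd : forall u, `|phi u - dd u| <= cmod (pimap op M u - dl e u) * w u.
  move=> u; rewrite /phi /dd; case: eqP => [h|nh].
    rewrite (_ : (if u == e then 1 else 0) = complex.Re (dl e u)); last by rewrite /dl; case: ifP.
    by rewrite -Re_sub (le_trans (Re_le _)) // ler_peMr ?cmod_ge0 // (w_ge1 h).
  case: eqP => [ue|_]; first by exfalso; apply: nh; rewrite ue hl.
  by rewrite subr0 normr0 mulr_ge0 ?cmod_ge0 ?w_ge0.
rewrite /l1norm; apply: fine_le.
- rewrite ge0_fin_numE; last by apply: esum_ge0 => x _; rewrite lee_fin.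
  exact: esum_le_lt bnd hfin.
- by rewrite ge0_fin_numE //; apply: esum_ge0 => x _; rewrite lee_fin mulr_ge0 ?cmod_ge0 ?w_ge0.
- by apply: le_esum => x _; rewrite lee_fin.
Qed.

Lemma Q2 s (nl : ~ exists l, op l s = e) (M : S * S -> R[i]) : in_l1 (wprod w) M ->
  w s * `|rsum (Qf s M)| <=
  l1norm (wprod w) (fun q => lact op (dl s) M q - ract op M (dl s) q).
Proof.
move=> hM.
pose i2 := fun p : S * S => ((p.1, op p.2 s), (p.2, s)).
pose K := fun x : (S * S) * (S * S) =>
  if (op x.1.1 x.1.2 == s) && (op x.2.1 x.2.2 == x.1.2) && (x.2.2 == s)
  then complex.Re (M (x.1.1, x.2.1)) else 0.
have ii2 : injective i2 by move=> [p1 p2] [q1 q2] /= [] => *; subst.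
have ri2 : forall x, K x != 0 -> exists p, x = i2 p.
  move=> [[q1 q2] [p1 p2]]; rewrite /K /=.
  case: ifP => [/andP[/andP[_ /eqP e1] /eqP e2] _|_]; last by rewrite eqxx.
  by exists (q1, p1); rewrite /i2 /= -e1 e2.
have r1 : rsum (Qf s M) = rsum K.
  rewrite [RHS](rsum_reindex ii2 ri2); apply: rsum_eq => -[p1 p2].
  by rewrite /Qf /K /= !eqxx !andbT op_assoc'.
have sK : summ K.
  rewrite /summ (esum_reindexR (G := fun x => `|K x|) ii2) //; last first.
    by move=> x; rewrite normr_eq0; exact: ri2.
  apply: (@esum_le_lt _ _ _ (fun p => cmod (M p) * wprod w p)) => // -[p1 p2].
  rewrite /K /= !eqxx !andbT op_assoc'.
  case: eqP => [h|_]; last by rewrite normr0 mulr_ge0 ?cmod_ge0 ?wprod_ge0.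
  by rewrite (le_trans (Re_le _)) // ler_peMr ?cmod_ge0 // (@wprod_ge1 s (p1, p2) h).
pose psi := fun q : S * S => if op q.1 q.2 == s then complex.Re (ract op M (dl s) q) else 0.
have r2 : rsum K = rsum psi.
  rewrite (rsum_fubini sK); apply: rsum_eq => -[q1 q2]; rewrite /psi /=.
  case: ifP => hq; last by rewrite rsum0 // => p; rewrite /K /= hq.
  rewrite /ract ?Re_csum; apply: rsum_eq => -[p1 p2]; rewrite /K /= hq /= /dl.
  case: (op p1 p2 == q2); case: (p2 == s) => //=; by rewrite ?mulr1 ?mulr0.
set D := fun q => lact op (dl s) M q - ract op M (dl s) q.
have hD : in_l1 (wprod w) D.
  by apply: in_l1_sub; [exact: wprod_ge0|exact: lact_l1|exact: ract_l1].
have ws0 := w_gt0 s.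
have bnd : forall q, `|psi q| <= (w s)^-1 * (cmod (D q) * wprod w q).
  move=> q; rewrite -[`|psi q|](mulKf (lt0r_neq0 ws0)) ler_pM2l ?invr_gt0 //.
  rewrite /psi; case: eqP => [h|_]; last by rewrite normr0 mulr0 mulr_ge0 ?cmod_ge0 ?wprod_ge0.
  rewrite mulrC; apply: ler_pM; rewrite ?normr_ge0 ?w_ge0 //.
    by rewrite /D; apply: keyB.
  by rewrite -h /wprod w_mul.
have Dfin : (\esum_(x in [set: S * S]) (cmod (D x) * wprod w x)%:E < +oo)%E := hD.
have Dge : forall x, (0 <= (cmod (D x) * wprod w x)%:E)%E.
  by move=> x; rewrite lee_fin mulr_ge0 ?cmod_ge0 ?wprod_ge0.
have spsi : summ psi.
  apply: (summ_le bnd); under eq_esum do rewrite EFinM.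
  rewrite esumZ ?invr_ge0 ?w_ge0 //.
  apply: lte_mul_pinfty => //; by rewrite lee_fin invr_ge0 ltW.
rewrite r1 r2.
apply: (le_trans (ler_wpM2l (ltW ws0) (rsum_abs spsi))).
have : (\esum_(x in [set: S * S]) (`|psi x|)%:E <=
        ((w s)^-1)%:E * \esum_(x in [set: S * S]) (cmod (D x) * wprod w x)%:E)%E.
  rewrite -esumZ ?invr_ge0 ?w_ge0 //; apply: le_esum => x _; by rewrite -EFinM lee_fin.
rewrite (esum_fin (fun x => normr_ge0 (psi x)) spsi) (esum_fin (fun x => mulr_ge0 (cmod_ge0 (D x)) (wprod_ge0 x)) Dfin).
rewrite -EFinM lee_fin => h.
rewrite /l1norm; have := ler_wpM2l (ltW ws0) h; rewrite mulrA mulfV ?lt0r_neq0 // mul1r.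
by [].
Qed.

Lemma stepB s : exists l, op l s = e.
Proof.
case: (pselect (exists l, op l s = e)) => // nl; exfalso.
have e1 : 0 < (1 : R) / 2 by rewrite divr_gt0.
have e2 : 0 < w s / 2 by rewrite divr_gt0 ?w_gt0.
have [k [[_ h1] [h2 _]]] := two (in_l1_dl e) (in_l1_dl s) e1 e2.
have cl : forall g u, Defs.conv op (dl e) g u = g u.
  by move=> g u; have := conv_dl_at e u g; rewrite hl.
have ce : (fun u => Defs.conv op (dl e) (pimap op (m k)) u - dl e u) =
          (fun u => pimap op (m k) u - dl e u) by apply: funext => u; rewrite cl.
rewrite ce in h1.
have q1 := le_lt_trans (Q1 s (ml1 k)) h1.
have q2 := le_lt_trans (Q2 nl (ml1 k)) h2.
rewrite mulrC in q2; have q3 := half_lem (w_gt0 s) q2.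
set Q := rsum (Qf s (m k)) in q1 q3.
have : `|Q - (Q - 1)| <= `|Q| + `|Q - 1| by apply: ler_normB.
rewrite opprB addrC subrK normr1 => c1.
have q4 : `|Q - 1| < 1 / 2 by [].
by have := le_lt_trans c1 (ltrD q3 q4); rewrite -splitr ltxx.
Qed.

End StepB.

Lemma group_net (s0 : S) : is_group op.
Proof.
have [e he] := stepA s0.
have hl0 : forall x, op e x = x by move=> x; case: (he x).
have hr0 : forall x, op x e = x by move=> x; case: (he x).
exists e; split => // x.
have [l hlx] := stepB hl0 hr0 x.
exists l; split => //.
have [l2 h2] := stepB hl0 hr0 l.
have xl2 : x = l2.
  by rewrite -[x]hl0 -h2 -op_assoc' hlx hr0.
by rewrite xl2.
Qed.

End Net.

End Semi.


Unset Implicit Arguments. Set Strict Implicit.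
Local Close Scope classical_set_scope.

Theorem theorem2p10 (R : realType) (S : choiceType) (op : S -> S -> S)
    (op_assoc : associative op) (S_nonempty : inhabited S)
    (lc : left_cancellative op) (w : S -> R) (hw : is_weight op w) :
  pseudo_amenable_l1 op w -> is_group op.
Proof.
move=> [I [le [m [_ _ dir ml1 H]]]].
case: S_nonempty => s0.
exact: (group_net lc hw dir ml1 H op_assoc s0).
Qed.
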